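(* Let $\ell>r\ge 2$ be integers and let $m=m_{r,\ell}$. Then (i) $m>\max\left\{\frac{\ell(r-1)}{2(\ell-r)},\,r-1\right\}$; and (ii) $m<\min\left\{\frac{\ell(\ell-1)}{2(\ell-r)},\,\frac{r}{\alpha}\right\}$, where $\alpha=\alpha(\ell/r)$ is the unique positive real root of the equation $e^{(\ell/r)x}(1-x)=1$, and $\alpha\in(1-r^2/\ell^2,\,1)$. In particular, $m<\frac{r\ell^2}{\ell^2-r^2}$.
   Context: $m_{r,\ell}$ is the unique integer $k\ge r$ maximizing $f(k)=\frac{(k-1)(k-2)\cdots(k-r+1)}{k^{\ell-1}}$ over all integers $k\ge r$. *)

(* Defs.v *)
From Stdlib Require Import Reals Lra Lia.
Open Scope R_scope.

(* falling_prod k j = (k-1)(k-2)...(k-j)  (as reals; used only with j < k) *)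
Fixpoint falling_prod (k j : nat) : R :=
  match j with
  | O => 1
  | S j' => INR (k - S j') * falling_prod k j'
  end.

Definition frl (r l k : nat) : R :=
  falling_prod k (r - 1) / (INR k ^ (l - 1)).

Definition is_mrl (r l m : nat) : Prop :=
  (r <= m)%nat /\
  (forall k : nat, (r <= k)%nat -> frl r l k <= frl r l m) /\
  (forall k : nat, (r <= k)%nat -> frl r l k = frl r l m -> k = m).

(* Main.v *)
Require Import Defs.
From Stdlib Require Import Reals Lra Lia.
From Coquelicot Require Import Coquelicot.
Open Scope R_scope.

Lemma strict_incr (f f' : R -> R) a b : a < b ->
  (forall c, a <= c <= b -> derivable_pt_lim f c (f' c)) ->
  (forall c, a < c < b -> 0 < f' c) -> f a < f b.
Proof.
  intros hab hd hp. destruct (MVT_cor2 f f' a b hab hd) as [c [hc1 hc2]].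
  assert (0 < f' c * (b - a)) by (apply Rmult_lt_0_compat; [apply hp; lra| lra]).
  lra.
Qed.

Lemma LA (w : R) : 0 < w < 1 -> ln (1 + w) - ln (1 - w) < 2 * w + 2 * w ^ 3 / (3 * (1 - w ^ 2)).
Proof.
  intros hw.
  set (f := fun x => 2 * x + 2 * x ^ 3 / (3 * (1 - x ^ 2)) - (ln (1 + x) - ln (1 - x))).
  assert (f 0 < f w).
  { apply (strict_incr f (fun x => 4 * x ^ 4 / (3 * (1 - x ^ 2) ^ 2))).
    - lra.
    - intros c hc. apply is_derive_Reals. unfold f.
      auto_derive.
      + repeat split; try nra.
      + assert (1 - c^2 > 0) by nra. field. repeat split; intro; nra.
    - intros c hc. apply Rdiv_lt_0_compat.
      + apply Rmult_lt_0_compat; [lra| apply pow_lt; lra].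
      + assert (0 < 1 - c^2) by nra. apply Rmult_lt_0_compat; [lra| apply pow_lt; lra]. }
  unfold f in H. rewrite !Rplus_0_r, Rminus_0_r, ln_1 in H. lra.
Qed.

Lemma LB (z : R) : 0 < z < 1 -> 2 * z + 2 * z ^ 3 / 3 < ln (1 + z) - ln (1 - z).
Proof.
  intros hz.
  set (f := fun x => (ln (1 + x) - ln (1 - x)) - (2 * x + 2 * x ^ 3 / 3)).
  assert (f 0 < f z).
  { apply (strict_incr f (fun x => 2 * x ^ 4 / (1 - x ^ 2))).
    - lra.
    - intros c hc. apply is_derive_Reals. unfold f.
      auto_derive.
      + repeat split; try nra.
      + assert (1 - c^2 > 0) by nra. field. repeat split; intro; nra.
    - intros c hc. apply Rdiv_lt_0_compat.
      + apply Rmult_lt_0_compat; [lra| apply pow_lt; lra].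
      + nra. }
  unfold f in H. rewrite !Rplus_0_r, Rminus_0_r, ln_1 in H. lra.
Qed.

Lemma ln_gt_aux (c : R) : 0 < c < 1 -> - (c / (1 - c)) < ln (1 - c).
Proof.
  intros hc.
  assert (hu : 0 < c / (1 - c)) by (apply Rdiv_lt_0_compat; lra).
  assert (h1 := exp_ineq1 (c / (1 - c)) ltac:(lra)).
  assert (h2 : exp (- (c / (1 - c))) < 1 - c).
  { rewrite exp_Ropp. set (u := c / (1 - c)) in *.
    replace (1 - c) with (/ (1 + u)) by (unfold u; field; lra).
    apply Rinv_lt_contravar; [apply Rmult_lt_0_compat; [lra|apply exp_pos]|lra]. }
  rewrite <- (ln_exp (- (c / (1 - c)))). apply ln_increasing; [apply exp_pos|exact h2].
Qed.

Lemma psi_decr x y : 0 < x -> x < y -> y < 1 -> ln (1 - y) / y < ln (1 - x) / x.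
Proof.
  intros hx hxy hy.
  set (f := fun c => - (ln (1 - c) / c)).
  assert (f x < f y).
  { apply (strict_incr f (fun c => (c / (1 - c) + ln (1 - c)) / c ^ 2)).
    - lra.
    - intros c hc. apply is_derive_Reals. unfold f.
      auto_derive.
      + repeat split; try lra.
      + replace (1 + - c) with (1 - c) by ring. field. repeat split; intro; nra.
    - intros c hc. apply Rdiv_lt_0_compat.
      + assert (h := ln_gt_aux c ltac:(lra)). lra.
      + apply pow_lt; lra. }
  unfold f in H. lra.
Qed.

Lemma ln_ratio a b : 0 < a -> a < b ->
  ln (b / a) = ln (1 + (b - a) / (b + a)) - ln (1 - (b - a) / (b + a)).
Proof.
  intros ha hab. rewrite <- ln_div.
  - f_equal. field. lra.
  - replace (1 + (b - a) / (b + a)) with (2 * b / (b + a)) by (field; lra).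
    apply Rdiv_lt_0_compat; lra.
  - replace (1 - (b - a) / (b + a)) with (2 * a / (b + a)) by (field; lra).
    apply Rdiv_lt_0_compat; lra.
Qed.

Lemma LAr a b : 0 < a -> a < b -> let z := (b - a) / (b + a) in
  ln (b / a) < 2 * z + 2 * z ^ 3 / (3 * (1 - z ^ 2)).
Proof.
  intros ha hab z. rewrite ln_ratio by lra. apply LA. unfold z. split.
  - apply Rdiv_lt_0_compat; lra.
  - apply Rmult_lt_reg_r with (b + a); [lra|]. unfold Rdiv. rewrite Rmult_assoc, Rinv_l by lra. lra.
Qed.

Lemma LBr a b : 0 < a -> a < b -> let z := (b - a) / (b + a) in
  2 * z + 2 * z ^ 3 / 3 < ln (b / a).
Proof.
  intros ha hab z. rewrite ln_ratio by lra. apply LB. unfold z. split.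
  - apply Rdiv_lt_0_compat; lra.
  - apply Rmult_lt_reg_r with (b + a); [lra|]. unfold Rdiv. rewrite Rmult_assoc, Rinv_l by lra. lra.
Qed.

Lemma lnS_upper k : 0 < k ->
  ln ((k + 1) / k) < (12 * k ^ 2 + 12 * k + 1) / (6 * k * (k + 1) * (2 * k + 1)).
Proof.
  intros hk. assert (h := LAr k (k + 1) hk ltac:(lra)). simpl in h.
  replace ((k + 1 - k) / (k + 1 + k)) with (1 / (2 * k + 1)) in h by (field; lra).
  eapply Rlt_le_trans; [exact h|]. right. field. repeat split; intro; nra.
Qed.

Lemma lnS_lower k : 0 < k -> 2 / (2 * k + 1) < ln ((k + 1) / k).
Proof.
  intros hk. assert (h := LBr k (k + 1) hk ltac:(lra)). simpl in h.
  replace ((k + 1 - k) / (k + 1 + k)) with (1 / (2 * k + 1)) in h by (field; lra).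
  eapply Rle_lt_trans; [|exact h].
  assert (0 < (1 / (2 * k + 1)) ^ 3) by (apply pow_lt; apply Rdiv_lt_0_compat; lra).
  replace (2 / (2 * k + 1)) with (2 * (1 / (2 * k + 1))) by (field; lra). lra.
Qed.

Lemma lnD_lower k s : 0 < s -> s < k -> let D := 2 * k - s in
  2 * s * (3 * D ^ 2 + s ^ 2) / (3 * D ^ 3) < ln (k / (k - s)).
Proof.
  intros hs hk D. assert (h := LBr (k - s) k ltac:(lra) ltac:(lra)). simpl in h.
  replace ((k - (k - s)) / (k + (k - s))) with (s / D) in h by (unfold D; field; lra).
  eapply Rle_lt_trans; [|exact h]. right. field. unfold D; lra.
Qed.

Lemma lnD_upper k s : 0 < s -> s < k ->
  ln (k / (k - s)) < s * (2 * k - s) / (2 * k * (k - s)).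
Proof.
  intros hs hk. assert (h := LAr (k - s) k ltac:(lra) ltac:(lra)). simpl in h.
  set (z := (k - (k - s)) / (k + (k - s))) in h.
  assert (hz : z = s / (2 * k - s)) by (unfold z; field; lra).
  assert (hz0 : 0 < z) by (rewrite hz; apply Rdiv_lt_0_compat; lra).
  assert (hz1 : z < 1).
  { rewrite hz. apply Rmult_lt_reg_r with (2 * k - s); [lra|]. unfold Rdiv. rewrite Rmult_assoc, Rinv_l by lra. lra. }
  assert (h1z : 0 < 1 - z ^ 2) by nra.
  assert (h2 : 2 * z + 2 * z ^ 3 / (3 * (1 - z ^ 2)) < 2 * z / (1 - z ^ 2)).
  { apply Rmult_lt_reg_r with (3 * (1 - z ^ 2)); [lra|].
    replace ((2 * z + 2 * z ^ 3 / (3 * (1 - z ^ 2))) * (3 * (1 - z ^ 2))) with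
      (6 * z * (1 - z ^ 2) + 2 * z ^ 3) by (field; lra).
    replace (2 * z / (1 - z ^ 2) * (3 * (1 - z ^ 2))) with (6 * z) by (field; lra).
    assert (0 < z ^ 3) by (apply pow_lt; lra). nra. }
  eapply Rlt_trans; [exact h|]. eapply Rlt_le_trans; [exact h2|]. right.
  rewrite hz. field. repeat split; intro; nra.
Qed.

Lemma fp_succ k j : falling_prod (S k) j * INR (k - j) = INR k * falling_prod k j.
Proof.
  induction j as [|j IH]; simpl.
  - rewrite Nat.sub_0_r. ring.
  - replace (k - j)%nat with (k - j)%nat by reflexivity.
    transitivity (INR (k - S j) * (falling_prod (S k) j * INR (k - j))); [|rewrite IH; ring].
    ring.
Qed.

Lemma fp_pos k j : (j < k)%nat -> 0 < falling_prod k j.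
Proof.
  induction j as [|j IH]; intros h; simpl.
  - lra.
  - apply Rmult_lt_0_compat; [apply lt_0_INR; lia| apply IH; lia].
Qed.

Lemma step_core k j N : (j < k)%nat ->
  falling_prod (S k) j / INR (S k) ^ N =
  (falling_prod k j / INR k ^ N) * (INR k / INR (k - j)) / ((INR (S k) / INR k) ^ N).
Proof.
  intros h.
  assert (hk : 0 < INR k) by (apply lt_0_INR; lia).
  assert (hkj : 0 < INR (k - j)) by (apply lt_0_INR; lia).
  assert (hS : 0 < INR (S k)) by (apply lt_0_INR; lia).
  assert (e : falling_prod (S k) j = INR k * falling_prod k j / INR (k - j)).
  { rewrite <- fp_succ. field. lra. }
  assert (e2 : INR (S k) ^ N = (INR (S k) / INR k) ^ N * INR k ^ N).
  { rewrite <- Rpow_mult_distr. f_equal. field. lra. }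
  rewrite e, e2.
  assert (0 < INR k ^ N) by (apply pow_lt; lra).
  assert (0 < (INR (S k) / INR k) ^ N) by (apply pow_lt; apply Rdiv_lt_0_compat; lra).
  field. repeat split; lra.
Qed.

Lemma step_lt k j N : (j < k)%nat ->
  falling_prod k j / INR k ^ N < falling_prod (S k) j / INR (S k) ^ N ->
  INR N * ln (INR (S k) / INR k) < ln (INR k / INR (k - j)).
Proof.
  intros h H. rewrite step_core in H by exact h.
  assert (hk : 0 < INR k) by (apply lt_0_INR; lia).
  assert (hkj : 0 < INR (k - j)) by (apply lt_0_INR; lia).
  assert (hS : 0 < INR (S k)) by (apply lt_0_INR; lia).
  assert (hA : 0 < falling_prod k j / INR k ^ N) by (apply Rdiv_lt_0_compat; [apply fp_pos; exact h| apply pow_lt; lra]).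
  assert (hC : 0 < (INR (S k) / INR k) ^ N) by (apply pow_lt; apply Rdiv_lt_0_compat; lra).
  assert (hE : 0 < INR k / INR (k - j)) by (apply Rdiv_lt_0_compat; lra).
  set (A := falling_prod k j / INR k ^ N) in *.
  set (C := (INR (S k) / INR k) ^ N) in *.
  set (E := INR k / INR (k - j)) in *.
  assert (C < E).
  { apply Rmult_lt_reg_l with (A / C). apply Rdiv_lt_0_compat; lra.
    replace (A / C * C) with A by (field; lra).
    replace (A / C * E) with (A * E / C) by (field; lra). exact H. }
  rewrite <- ln_pow by (apply Rdiv_lt_0_compat; lra). apply ln_increasing; assumption.
Qed.

Lemma step_le k j N : (j < k)%nat ->
  INR N * ln (INR (S k) / INR k) <= ln (INR k / INR (k - j)) ->
  falling_prod k j / INR k ^ N <= falling_prod (S k) j / INR (S k) ^ N.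
Proof.
  intros h H. rewrite step_core by exact h.
  assert (hk : 0 < INR k) by (apply lt_0_INR; lia).
  assert (hkj : 0 < INR (k - j)) by (apply lt_0_INR; lia).
  assert (hS : 0 < INR (S k)) by (apply lt_0_INR; lia).
  assert (hA : 0 < falling_prod k j / INR k ^ N) by (apply Rdiv_lt_0_compat; [apply fp_pos; exact h| apply pow_lt; lra]).
  assert (hC : 0 < (INR (S k) / INR k) ^ N) by (apply pow_lt; apply Rdiv_lt_0_compat; lra).
  assert (hE : 0 < INR k / INR (k - j)) by (apply Rdiv_lt_0_compat; lra).
  rewrite <- ln_pow in H by (apply Rdiv_lt_0_compat; lra).
  set (A := falling_prod k j / INR k ^ N) in *.
  set (C := (INR (S k) / INR k) ^ N) in *.
  set (E := INR k / INR (k - j)) in *.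
  assert (C <= E).
  { destruct (Rle_lt_dec C E) as [?|hlt]; [assumption|].
    assert (ln E < ln C) by (apply ln_increasing; assumption). lra. }
  apply Rmult_le_reg_l with (C / A). apply Rdiv_lt_0_compat; lra.
  replace (C / A * A) with C by (field; lra).
  replace (C / A * (A * E / C)) with E by (field; lra). assumption.
Qed.

Lemma poly_lower M s p : 1 <= s -> s < M -> 0 <= p -> p * (2 * M - s) <= s * (2 * M + 1) ->
  p * ((12 * M ^ 2 + 12 * M + 1) / (6 * M * (M + 1) * (2 * M + 1)))
  <= 2 * s * (3 * (2 * M - s) ^ 2 + s ^ 2) / (3 * (2 * M - s) ^ 3).
Proof.
  intros hs hM hp H.
  set (D := 2 * M - s) in *.
  assert (hD : 0 < D) by (unfold D; lra).
  set (A := (12 * M ^ 2 + 12 * M + 1) / (6 * M * (M + 1) * (2 * M + 1))).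
  assert (hA : 0 < A).
  { unfold A. apply Rdiv_lt_0_compat; [nra|].
    assert (0 < M * (M + 1)) by nra. nra. }
  assert (hp2 : p <= s * (2 * M + 1) / D).
  { apply Rmult_le_reg_r with D; [lra|]. replace (s * (2 * M + 1) / D * D) with (s * (2 * M + 1)) by (field; lra). lra. }
  apply Rle_trans with (s * (2 * M + 1) / D * A).
  { apply Rmult_le_compat_r; lra. }
  assert (hdiff : 2 * s * (3 * D ^ 2 + s ^ 2) / (3 * D ^ 3) - s * (2 * M + 1) / D * A
     = s * (4 * M * (M + 1) * s ^ 2 - D ^ 2) / (6 * M * (M + 1) * D ^ 3)).
  { unfold A. field. repeat split; intro; nra. }
  assert (0 <= s * (4 * M * (M + 1) * s ^ 2 - D ^ 2) / (6 * M * (M + 1) * D ^ 3)).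
  { apply Rmult_le_pos.
    - apply Rmult_le_pos; [lra|].
      assert (D <= 2 * M) by (unfold D; lra).
      assert (D ^ 2 <= 4 * M ^ 2) by nra.
      assert (M ^ 2 <= M * (M + 1) * s ^ 2).
      { assert (1 <= s ^ 2) by nra. assert (0 < M * (M+1)) by nra.
        assert (M ^ 2 <= M * (M + 1)) by nra. nra. }
      nra.
    - apply Rlt_le, Rinv_0_lt_compat.
      assert (0 < D ^ 3) by (apply pow_lt; lra). assert (0 < M * (M+1)) by nra. nra. }
  lra.
Qed.

Lemma poly_upper n s p : 1 <= s -> s + 1 <= n -> 1 <= p - s ->
  2 * (n + 1) * (p - s) >= p * (p + 1) ->
  s * (2 * n - s) / (2 * n * (n - s)) <= p * (2 / (2 * n + 1)).
Proof.
  intros hs hn hq H.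
  set (q := p - s) in *.
  assert (h1 : 4 * q * n >= 4 * p * s + 2 * s - 2 * s ^ 2).
  { assert (2 * q ^ 2 - 2 * q >= 0) by nra.
    assert (e : 2 * p * (p + 1) - 4 * q - (4 * p * s + 2 * s - 2 * s ^ 2) = 2 * q ^ 2 - 2 * q) by (unfold q; ring).
    nra. }
  assert (hE : 4 * p * n * (n - s) - s * (2 * n - s) * (2 * n + 1) >= s ^ 2).
  { assert (e : 4 * p * n * (n - s) - s * (2 * n - s) * (2 * n + 1)
       = n * (4 * q * n - (4 * p * s + 2 * s - 2 * s ^ 2)) + s ^ 2) by (unfold q; ring).
    rewrite e. assert (0 <= n * (4 * q * n - (4 * p * s + 2 * s - 2 * s ^ 2))) by (apply Rmult_le_pos; lra).
    lra. }
  apply Rmult_le_reg_r with (2 * n * (n - s) * (2 * n + 1)).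
  { assert (0 < n * (n - s)) by nra. nra. }
  replace (s * (2 * n - s) / (2 * n * (n - s)) * (2 * n * (n - s) * (2 * n + 1)))
    with (s * (2 * n - s) * (2 * n + 1)) by (field; lra).
  replace (p * (2 / (2 * n + 1)) * (2 * n * (n - s) * (2 * n + 1)))
    with (4 * p * n * (n - s)) by (field; lra).
  nra.
Qed.

Lemma INR_pred n : (1 <= n)%nat -> INR (n - 1) = INR n - 1.
Proof. intros h. rewrite minus_INR by exact h. reflexivity. Qed.

Lemma lower_part r l m : (2 <= r)%nat -> (r < l)%nat -> is_mrl r l m ->
  INR l * (INR r - 1) / (2 * (INR l - INR r)) < INR m.
Proof.
  intros hr hrl [hrm [hmax huniq]].
  assert (hR : 2 <= INR r) by (apply (le_INR 2); lia).
  assert (hRL : INR r + 1 <= INR l) by (rewrite <- S_INR; apply le_INR; lia).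
  assert (hRM : INR r <= INR m) by (apply le_INR; lia).
  destruct (Rlt_le_dec (INR l * (INR r - 1) / (2 * (INR l - INR r))) (INR m)) as [ok|H]; [exact ok|].
  exfalso.
  assert (H2 : 2 * INR m * (INR l - INR r) <= INR l * (INR r - 1)).
  { apply Rmult_le_reg_r with (/ (2 * (INR l - INR r))).
    - apply Rinv_0_lt_compat; lra.
    - replace (2 * INR m * (INR l - INR r) * / (2 * (INR l - INR r))) with (INR m) by (field; lra).
      exact H. }
  assert (hle : frl r l m <= frl r l (S m)).
  { unfold frl. apply step_le; [lia|].
    rewrite S_INR, INR_pred by lia. rewrite minus_INR by lia. rewrite INR_pred by lia.
    set (M := INR m) in *. set (L := INR l) in *. set (R := INR r) in *.
    assert (hM : 0 < M) by lra.
    assert (hu := lnS_upper M hM).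
    assert (hl := lnD_lower M (R - 1) ltac:(lra) ltac:(lra)). cbv zeta in hl.
    replace (M - (R - 1 - 1 + 1)) with (M - (R - 1)) by ring.
    assert (hp := poly_lower M (R - 1) (L - 1) ltac:(lra) ltac:(lra) ltac:(lra) ltac:(nra)).
    assert ((L - 1) * ln ((M + 1) / M) <= (L - 1) * ((12 * M ^ 2 + 12 * M + 1) / (6 * M * (M + 1) * (2 * M + 1)))).
    { apply Rmult_le_compat_l; lra. }
    lra. }
  assert (S m = m) by (apply huniq; [lia| apply Rle_antisym; [apply hmax; lia| exact hle]]).
  lia.
Qed.

Lemma upper_step r l m : (2 <= r)%nat -> (r < l)%nat -> is_mrl r l m -> (r < m)%nat ->
  (INR l - 1) * ln (INR m / (INR m - 1)) < ln ((INR m - 1) / (INR m - INR r)).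
Proof.
  intros hr hrl [hrm [hmax huniq]] hlt.
  destruct m as [|n]; [lia|].
  assert (hlt2 : frl r l n < frl r l (S n)).
  { destruct (Rle_lt_or_eq_dec _ _ (hmax n ltac:(lia))) as [h|h]; [exact h|].
    apply huniq in h; lia. }
  unfold frl in hlt2. apply step_lt in hlt2; [|lia].
  rewrite S_INR in *. rewrite INR_pred in hlt2 by lia. rewrite minus_INR in hlt2 by lia.
  rewrite INR_pred in hlt2 by lia.
  replace (INR n + 1 - 1) with (INR n) by ring.
  replace (INR n - (INR r - 1)) with (INR n + 1 - INR r) in hlt2 by ring.
  exact hlt2.
Qed.

Lemma upper_part1 r l m : (2 <= r)%nat -> (r < l)%nat -> is_mrl r l m ->
  INR m < INR l * (INR l - 1) / (2 * (INR l - INR r)).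
Proof.
  intros hr hrl hm.
  assert (hR : 2 <= INR r) by (apply (le_INR 2); lia).
  assert (hRL : INR r + 1 <= INR l) by (rewrite <- S_INR; apply le_INR; lia).
  assert (hRM : INR r <= INR m) by (apply le_INR; destruct hm; lia).
  apply Rmult_lt_reg_r with (2 * (INR l - INR r)); [lra|].
  replace (INR l * (INR l - 1) / (2 * (INR l - INR r)) * (2 * (INR l - INR r)))
    with (INR l * (INR l - 1)) by (field; lra).
  destruct (Nat.eq_dec m r) as [e|ne].
  { subst m. nra. }
  assert (hlt : (r < m)%nat) by (destruct hm; lia).
  assert (hs := upper_step r l m hr hrl hm hlt).
  assert (hRM2 : INR r + 1 <= INR m) by (rewrite <- S_INR; apply le_INR; lia).
  set (M := INR m) in *. set (L := INR l) in *. set (R := INR r) in *.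
  destruct (Rlt_le_dec (M * (2 * (L - R))) (L * (L - 1))) as [ok|H]; [exact ok|].
  exfalso.
  set (n := M - 1).
  assert (hlow := lnS_lower n ltac:(unfold n; lra)).
  replace (n + 1) with M in hlow by (unfold n; ring).
  assert (hup := lnD_upper n (R - 1) ltac:(lra) ltac:(unfold n; lra)).
  replace (n - (R - 1)) with (M - R) in hup by (unfold n; ring).
  assert (hp := poly_upper n (R - 1) (L - 1) ltac:(lra) ltac:(unfold n; lra) ltac:(lra)
     ltac:(unfold n; nra)).
  assert ((L - 1) * (2 / (2 * n + 1)) <= (L - 1) * ln (M / n)).
  { apply Rmult_le_compat_l; lra. }
  replace (n - (R - 1)) with (M - R) in hp by (unfold n; ring). fold n in hs. lra.
Qed.

Lemma root_facts t a : 0 < a -> exp (t * a) * (1 - a) = 1 -> a < 1 /\ ln (1 - a) / a = - t.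
Proof.
  intros ha h.
  assert (ha1 : a < 1).
  { destruct (Rlt_le_dec a 1) as [?|hge]; [assumption|].
    assert (exp (t * a) * (1 - a) <= 0).
    { assert (0 < exp (t * a)) by apply exp_pos. nra. }
    lra. }
  split; [exact ha1|].
  assert (e : ln (exp (t * a) * (1 - a)) = 0) by (rewrite h; apply ln_1).
  rewrite ln_mult, ln_exp in e by (try apply exp_pos; lra).
  apply Rmult_eq_reg_r with a; [|lra].
  replace (ln (1 - a) / a * a) with (ln (1 - a)) by (field; lra). lra.
Qed.

Lemma cmp_neg t a x : 0 < a -> a < 1 -> ln (1 - a) / a = - t -> 0 < x -> x < 1 ->
  t * x + ln (1 - x) < 0 -> a < x.
Proof.
  intros ha ha1 ea hx hx1 h.
  assert (hp : ln (1 - x) / x < - t).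
  { apply Rmult_lt_reg_r with x; [lra|].
    replace (ln (1 - x) / x * x) with (ln (1 - x)) by (field; lra). lra. }
  destruct (Rtotal_order a x) as [?|[e|hgt]]; [assumption| subst; lra|].
  assert (ln (1 - a) / a < ln (1 - x) / x) by (apply psi_decr; lra). lra.
Qed.

Lemma cmp_pos t a x : 0 < a -> a < 1 -> ln (1 - a) / a = - t -> 0 < x -> x < 1 ->
  0 < t * x + ln (1 - x) -> x < a.
Proof.
  intros ha ha1 ea hx hx1 h.
  assert (hp : - t < ln (1 - x) / x).
  { apply Rmult_lt_reg_r with x; [lra|].
    replace (ln (1 - x) / x * x) with (ln (1 - x)) by (field; lra). lra. }
  destruct (Rtotal_order x a) as [?|[e|hgt]]; [assumption| subst; lra|].
  assert (ln (1 - x) / x < ln (1 - a) / a) by (apply psi_decr; lra). lra.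
Qed.

Lemma y0_pos R L : 0 < R -> R < L ->
  0 < L / R * (1 - R ^ 2 / L ^ 2) + ln (1 - (1 - R ^ 2 / L ^ 2)).
Proof.
  intros hR hRL.
  set (u := L / R).
  assert (hu : 1 < u) by (unfold u; apply Rmult_lt_reg_r with R; [lra|]; unfold Rdiv; rewrite Rmult_assoc, Rinv_l; lra).
  replace (1 - (1 - R ^ 2 / L ^ 2)) with (/ (u ^ 2)) by (unfold u; field; lra).
  replace (u * (1 - R ^ 2 / L ^ 2)) with (u - / u) by (unfold u; field; lra).
  rewrite ln_Rinv by (apply pow_lt; lra). rewrite ln_pow by lra.
  assert (h := lnD_upper u (u - 1) ltac:(lra) ltac:(lra)).
  replace (u - (u - 1)) with 1 in h by ring.
  replace (u / 1) with u in h by field.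
  replace ((u - 1) * (2 * u - (u - 1)) / (2 * u * 1)) with ((u - / u) / 2) in h by (field; lra).
  simpl INR. lra.
Qed.

Lemma alpha_facts R L : 0 < R -> R < L ->
  (exists! a, 0 < a /\ exp (L / R * a) * (1 - a) = 1) /\
  (forall a, 0 < a -> exp (L / R * a) * (1 - a) = 1 ->
     a < 1 /\ 1 - R ^ 2 / L ^ 2 < a /\
     (forall x, 0 < x -> x < 1 -> L / R * x + ln (1 - x) < 0 -> a < x)).
Proof.
  intros hR hRL.
  set (t := L / R).
  set (y0 := 1 - R ^ 2 / L ^ 2).
  assert (hy0 : 0 < y0 < 1).
  { unfold y0. assert (0 < R ^ 2 / L ^ 2) by (apply Rdiv_lt_0_compat; apply pow_lt; lra).
    assert (R ^ 2 / L ^ 2 < 1).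
    { apply Rmult_lt_reg_r with (L ^ 2); [apply pow_lt; lra|].
      unfold Rdiv. rewrite Rmult_assoc, Rinv_l by (apply pow_nonzero; lra). nra. }
    lra. }
  assert (hphi := y0_pos R L hR hRL). fold t y0 in hphi.
  assert (part2 : forall a, 0 < a -> exp (t * a) * (1 - a) = 1 ->
     a < 1 /\ y0 < a /\
     (forall x, 0 < x -> x < 1 -> t * x + ln (1 - x) < 0 -> a < x)).
  { intros a ha h. destruct (root_facts t a ha h) as [ha1 ea].
    split; [exact ha1|]. split.
    - apply (cmp_pos t a y0); lra.
    - intros x hx hx1 hxn. apply (cmp_neg t a x); lra. }
  split; [|exact part2].
  set (f := fun x => 1 - exp (t * x) * (1 - x)).
  assert (hc : continuity f).
  { unfold f. reg. }
  assert (hf0 : f y0 < 0).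
  { unfold f. assert (e : exp (t * y0) * (1 - y0) = exp (t * y0 + ln (1 - y0))).
    { rewrite exp_plus, exp_ln by lra. reflexivity. }
    rewrite e. assert (exp 0 < exp (t * y0 + ln (1 - y0))) by (apply exp_increasing; lra).
    rewrite exp_0 in H. lra. }
  assert (hf1 : 0 < f 1) by (unfold f; replace (1 - 1) with 0 by ring; rewrite Rmult_0_r; lra).
  destruct (IVT f y0 1 hc ltac:(lra) hf0 hf1) as [a [ha hfa]].
  assert (hroot : exp (t * a) * (1 - a) = 1) by (unfold f in hfa; lra).
  exists a. split; [split; [lra| exact hroot]|].
  intros b [hb hbr].
  destruct (root_facts t a ltac:(lra) hroot) as [ha1 ea].
  destruct (root_facts t b hb hbr) as [hb1 eb].
  destruct (Rtotal_order a b) as [hlt|[e|hgt]]; [|exact e|].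
  - assert (ln (1 - b) / b < ln (1 - a) / a) by (apply psi_decr; lra). lra.
  - assert (ln (1 - a) / a < ln (1 - b) / b) by (apply psi_decr; lra). lra.
Qed.

Lemma phi_neg r l m : (2 <= r)%nat -> (r < l)%nat -> is_mrl r l m -> (r < m)%nat ->
  INR l / INR r * (INR r / INR m) + ln (1 - INR r / INR m) < 0.
Proof.
  intros hr hrl hm hlt.
  assert (hs := upper_step r l m hr hrl hm hlt).
  assert (hR : 2 <= INR r) by (apply (le_INR 2); lia).
  assert (hRL : INR r + 1 <= INR l) by (rewrite <- S_INR; apply le_INR; lia).
  assert (hRM2 : INR r + 1 <= INR m) by (rewrite <- S_INR; apply le_INR; lia).
  set (M := INR m) in *. set (L := INR l) in *. set (R := INR r) in *.
  assert (hlow := lnS_lower (M - 1) ltac:(lra)).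
  replace (M - 1 + 1) with M in hlow by ring.
  assert (h1 : 1 / M <= 2 / (2 * (M - 1) + 1)).
  { apply Rmult_le_reg_r with (M * (2 * (M - 1) + 1)); [nra|].
    replace (1 / M * (M * (2 * (M - 1) + 1))) with (2 * (M - 1) + 1) by (field; lra).
    replace (2 / (2 * (M - 1) + 1) * (M * (2 * (M - 1) + 1))) with (2 * M) by (field; lra). lra. }
  assert (h2 : (L - 1) / M <= (L - 1) * ln (M / (M - 1))).
  { replace ((L - 1) / M) with ((L - 1) * (1 / M)) by (field; lra).
    apply Rmult_le_compat_l; lra. }
  assert (e : ln ((M - 1) / (M - R)) + ln (M / (M - 1)) = ln (M / (M - R))).
  { rewrite <- ln_mult by (apply Rdiv_lt_0_compat; lra). f_equal. field. lra. }
  assert (e2 : ln (1 - R / M) = - ln (M / (M - R))).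
  { rewrite <- ln_Rinv by (apply Rdiv_lt_0_compat; lra). f_equal. field. lra. }
  rewrite e2.
  replace (L / R * (R / M)) with ((L - 1) / M + 1 / M) by (field; lra).
  lra.
Qed.

Theorem lemma4p2 (r l m : nat) (hr : (2 <= r)%nat) (hrl : (r < l)%nat)
  (hm : is_mrl r l m) :
  (* (i) *)
  (INR l * (INR r - 1) / (2 * (INR l - INR r)) < INR m /\ INR r - 1 < INR m) /\
  (* (ii) *)
  (INR m < INR l * (INR l - 1) / (2 * (INR l - INR r)) /\
   (exists! a : R, 0 < a /\ exp ((INR l / INR r) * a) * (1 - a) = 1) /\
   (forall a : R, 0 < a -> exp ((INR l / INR r) * a) * (1 - a) = 1 ->
      INR m < INR r / a /\ 1 - INR r ^ 2 / INR l ^ 2 < a /\ a < 1)) /\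
  (* in particular *)
  INR m < INR r * INR l ^ 2 / (INR l ^ 2 - INR r ^ 2).
Proof.
  assert (hR : 2 <= INR r) by (apply (le_INR 2); lia).
  assert (hRL : INR r + 1 <= INR l) by (rewrite <- S_INR; apply le_INR; lia).
  assert (hRM : INR r <= INR m) by (apply le_INR; destruct hm; lia).
  destruct (alpha_facts (INR r) (INR l) ltac:(lra) ltac:(lra)) as [hex hall].
  assert (key : forall a, 0 < a -> exp (INR l / INR r * a) * (1 - a) = 1 ->
      INR m < INR r / a /\ 1 - INR r ^ 2 / INR l ^ 2 < a /\ a < 1).
  { intros a ha he. destruct (hall a ha he) as [ha1 [hy hx]].
    split; [|split; assumption].
    destruct (Nat.eq_dec m r) as [e|ne].
    - subst m. apply Rmult_lt_reg_r with a; [lra|].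
      replace (INR r / a * a) with (INR r) by (field; lra). nra.
    - assert (hlt : (r < m)%nat) by (destruct hm; lia).
      assert (hRM2 : INR r + 1 <= INR m) by (rewrite <- S_INR; apply le_INR; lia).
      assert (hax : a < INR r / INR m).
      { apply hx.
        - apply Rdiv_lt_0_compat; lra.
        - apply Rmult_lt_reg_r with (INR m); [lra|].
          replace (INR r / INR m * INR m) with (INR r) by (field; lra). lra.
        - apply phi_neg; assumption. }
      apply Rmult_lt_reg_r with (a / INR m); [apply Rdiv_lt_0_compat; lra|].
      replace (INR m * (a / INR m)) with a by (field; lra).
      replace (INR r / a * (a / INR m)) with (INR r / INR m) by (field; lra). exact hax. }
  split; [split; [apply lower_part; assumption| lra]|].
  split; [split; [apply upper_part1; assumption| split; [exact hex| exact key]]|].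
  destruct hex as [a [[ha he] _]].
  destruct (key a ha he) as [h1 [h2 h3]].
  eapply Rlt_le_trans; [exact h1|].
  assert (hq : 0 < 1 - INR r ^ 2 / INR l ^ 2).
  { assert (INR r ^ 2 / INR l ^ 2 < 1); [|lra].
    apply Rmult_lt_reg_r with (INR l ^ 2); [apply pow_lt; lra|].
    unfold Rdiv. rewrite Rmult_assoc, Rinv_l by (apply pow_nonzero; lra). nra. }
  replace (INR r * INR l ^ 2 / (INR l ^ 2 - INR r ^ 2)) with (INR r / (1 - INR r ^ 2 / INR l ^ 2)).
  2:{ field. split; [|nra]. intro. nra. }
  apply Rmult_le_compat_l; [lra|]. apply Rlt_le, Rinv_lt_contravar; [nra|lra].
Qed.
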